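(* Let $n\geq 3$ and $d\geq 2$ be integers, and let $c,\alpha>0$ be such that for all ${X},{Y}\in\mathbb{R}^{d\times n}$ satisfying $\|{X}\|_{1,2}\leq 1$ and $\|{Y}\|_{1,2}\leq 1$ we have $$c\, d_{\mathcal{G}_{\pm}}^\alpha({X},{Y})\leq d_{\mathcal{D}}({X},{Y}).$$ Then $\alpha\geq 2$.
   Context: A point set is a matrix ${X}\in\mathbb{R}^{d\times n}$ with columns $x_1,\dots,x_n\in\mathbb{R}^d$. The Procrustes Matching metric is $$d_{\mathcal{G}_{\pm}}({X},{Y})=\Big[\min_{(\pi,R,t)\in S_n\times O(d)\times\mathbb{R}^d}\sum_{j=1}^n\|x_j-Ry_{\pi(j)}+t\|_2^2\Big]^{1/2},$$ i.e. the Frobenius distance between ${X}$ and ${Y}$ minimized over column permutations, orthogonal transformations and translations of ${Y}$. The Hard-Gromov-Wasserstein distance is $$d_{\mathcal{D}}({X},{Y})=\min_{\pi\in S_n}\sum_{i,j=1}^n\big|\,\|x_i-x_j\|_2-\|y_{\pi(i)}-y_{\pi(j)}\|_2\,\big|.$$ $\|{X}\|_{1,2}=\max_{1\le i\le n}\|x_i\|_2$. *)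

(* Defs.v *)
From HB Require Import structures.
From mathcomp Require Import all_boot all_order all_algebra all_fingroup.
From mathcomp Require Import all_classical all_reals all_analysis.
Set Implicit Arguments. Unset Strict Implicit. Unset Printing Implicit Defensive.
Import Order.TTheory GRing.Theory Num.Theory.
Local Open Scope ring_scope.
Local Open Scope classical_set_scope.

Section Defs.
Variable R : realType.

Definition norm2 (d : nat) (v : 'cV[R]_d) : R :=
  Num.sqrt (\sum_(i < d) v i 0 ^+ 2).

Definition norm12 (d n : nat) (X : 'M[R]_(d, n)) : R :=
  \big[Num.max/0]_(j < n) norm2 (col j X).

Definition orthogonal_mx (d : nat) (Q : 'M[R]_d) : Prop := Q^T *m Q = 1%:M.

Definition procrustes_cost (d n : nat) (X Y : 'M[R]_(d, n))
    (pi : 'S_n) (Q : 'M[R]_d) (t : 'cV[R]_d) : R :=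
  \sum_(j < n) norm2 (col j X - Q *m col (pi j) Y + t) ^+ 2.

(* Procrustes matching metric: square root of the minimum of the cost over
   S_n x O(d) x R^d (the minimum is attained, so it is the infimum). *)
Definition d_procrustes (d n : nat) (X Y : 'M[R]_(d, n)) : R :=
  Num.sqrt (inf [set r : R | exists (pi : 'S_n) (Q : 'M[R]_d) (t : 'cV[R]_d),
                   orthogonal_mx Q /\ r = procrustes_cost X Y pi Q t]).

Definition hgw_cost (d n : nat) (X Y : 'M[R]_(d, n)) (pi : 'S_n) : R :=
  \sum_(i < n) \sum_(j < n)
     `| norm2 (col i X - col j X) - norm2 (col (pi i) Y - col (pi j) Y) |.

Definition d_hgw (d n : nat) (X Y : 'M[R]_(d, n)) : R :=
  \big[Num.min/hgw_cost X Y 1%g]_(pi : 'S_n) hgw_cost X Y pi.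

End Defs.

(* Main.v *)
Require Import Defs.
From HB Require Import structures.
From mathcomp Require Import all_boot all_order all_algebra all_fingroup.
From mathcomp Require Import all_classical all_reals all_analysis.
From mathcomp Require Import ring lra.
Import Order.TTheory GRing.Theory Num.Theory.
Local Open Scope ring_scope.

Lemma final_ineq (R : realType) (c alpha K : R) : 0 < c -> 0 < alpha -> 0 < K ->
  (forall e : R, 0 < e -> e <= 1/2 -> c * e `^ alpha <= K * e ^+ 2) -> 2 <= alpha.
Proof.
move=> c0 a0 K0 H.
case: (leP 2 alpha) => // ha; exfalso.
set g := 2 - alpha.
have g0 : 0 < g by rewrite /g; lra.
set b := (c / (2 * K)) `^ (g^-1).
have b0 : 0 < b by apply: powR_gt0; apply: divr_gt0 => //; lra.
set e := Num.min (1/2) b.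
have e0 : 0 < e by rewrite /e lt_min; apply/andP; split => //; lra.
have e12 : e <= 1/2 by rewrite /e ge_min lexx.
have eb : e <= b by rewrite /e ge_min lexx orbT.
have := H e e0 e12.
have -> : e ^+ 2 = e `^ alpha * e `^ g.
  rewrite -powR_mulrn; last by apply: ltW.
  rewrite -powRD; last by apply/implyP => _; rewrite gt_eqF.
  by congr (_ `^ _); rewrite /g; lra.
have eg : e `^ g <= c / (2 * K).
  apply: (@le_trans _ _ (b `^ g)).
    by apply: ge0_ler_powR => //; [apply: ltW | rewrite nnegrE; apply: ltW | rewrite nnegrE; apply: ltW].
  rewrite /b -powRrM mulVf ?gt_eqF // powRr1 //.
  by apply: ltW; apply: divr_gt0 => //; lra.
have ea : 0 < e `^ alpha by apply: powR_gt0.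
move=> h.
have : K * (e `^ alpha * e `^ g) <= K * (e `^ alpha * (c / (2 * K))).
  by rewrite ler_pM2l // ler_pM2l.
have -> : K * (e `^ alpha * (c / (2 * K))) = c * e `^ alpha / 2.
  by field; rewrite gt_eqF.
move=> h2; nra.
Qed.

Section Constr.
Variable R : realType.

Definition xa (j : nat) : R := if j == 0%N then 1 else if j == 1%N then -1 else 0.
Definition ya (e : R) (j : nat) : R := if (2 <= j)%N then e else 0.

Definition XX d n : 'M[R]_(d, n) :=
  \matrix_(k, j) (if val k == 0%N then xa j else 0).
Definition YY d n (e : R) : 'M[R]_(d, n) :=
  \matrix_(k, j) (if val k == 0%N then xa j else if val k == 1%N then ya e j else 0).

Lemma sum2 d' (F : 'I_d'.+2 -> R) : (forall k : 'I_d'.+2, (2 <= val k)%N -> F k = 0) ->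
  \sum_k F k = F ord0 + F (lift ord0 ord0).
Proof.
move=> H; rewrite big_ord_recl big_ord_recl big1 ?addr0 ?addrA //.
by move=> i _; apply: H.
Qed.

Lemma norm2_XX d' n (i j : 'I_n) :
  norm2 (col i (XX d'.+2 n) - col j (XX d'.+2 n)) = Num.sqrt ((xa i - xa j) ^+ 2).
Proof.
rewrite /norm2 (@sum2 d' (fun k => (col i (XX d'.+2 n) - col j (XX d'.+2 n)) k 0 ^+ 2)).
  by rewrite !mxE /= subrr expr0n addr0.
move=> k hk.
have h0 : (val k == 0%N) = false by move: hk; case: (val k).
have h1 : (val k == 1%N) = false by move: hk; case: (val k) => [|[|]].
by rewrite !mxE h0 ?h1 subrr expr0n.
Qed.

Lemma norm2_YY d' n e (i j : 'I_n) :
  norm2 (col i (YY d'.+2 n e) - col j (YY d'.+2 n e)) =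
  Num.sqrt ((xa i - xa j) ^+ 2 + (ya e i - ya e j) ^+ 2).
Proof.
rewrite /norm2 (@sum2 d' (fun k => (col i (YY d'.+2 n e) - col j (YY d'.+2 n e)) k 0 ^+ 2)).
  by rewrite !mxE /=.
move=> k hk.
have h0 : (val k == 0%N) = false by move: hk; case: (val k).
have h1 : (val k == 1%N) = false by move: hk; case: (val k) => [|[|]].
by rewrite !mxE h0 ?h1 subrr expr0n.
Qed.


Lemma cost_lb d' n' (e : R) (pi : 'S_n'.+3) (Q : 'M[R]_d'.+2) (t : 'cV[R]_d'.+2) :
  0 < e -> e <= 1 -> orthogonal_mx Q ->
  e ^+ 2 / 2 <= procrustes_cost (XX d'.+2 n'.+3) (YY d'.+2 n'.+3 e) pi Q t.
Proof.
move=> e0 e1 oQ.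
set X := XX d'.+2 n'.+3; set Y := YY d'.+2 n'.+3 e.
rewrite /procrustes_cost.
have -> : \sum_j norm2 (col j X - Q *m col (pi j) Y + t) ^+ 2 =
   \sum_j \sum_k (col j X - Q *m col (pi j) Y + t) k 0 ^+ 2.
  apply: eq_bigr => j _; rewrite /norm2 sqr_sqrtr //.
  by apply: sumr_ge0 => k _; exact: sqr_ge0.
rewrite exchange_big big_ord_recl /=.
set o1 : 'I_d'.+2 := lift ord0 ord0.
have HG : forall k' : 'I_d'.+1,
  e ^+ 2 * (Q (lift ord0 k') ord0 ^+ 2 + Q (lift ord0 k') o1 ^+ 2) <=
  2 * \sum_j (col j X - Q *m col (pi j) Y + t) (lift ord0 k') 0 ^+ 2.
  move=> k'; set k := lift ord0 k'.
  pose h (m : 'I_n'.+3) := (t k 0 - (Q k ord0 * xa m + Q k o1 * ya e m)) ^+ 2.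
  have -> : \sum_j (col j X - Q *m col (pi j) Y + t) k 0 ^+ 2 = \sum_j h (pi j).
    apply: eq_bigr => j _; rewrite /h !mxE.
    have -> : (val k == 0%N) = false by [].
    rewrite (@sum2 d' (fun l => Q k l * col (pi j) Y l 0)).
      rewrite !mxE /=; congr (_ ^+ 2); ring.
    move=> l hl.
    have h0 : (val l == 0%N) = false by move: hl; case: (val l).
    have h1 : (val l == 1%N) = false by move: hl; case: (val l) => [|[|]].
    by rewrite !mxE h0 h1 mulr0.
  rewrite -(reindex_inj (@perm_inj _ pi) (P := xpredT) (F := h)).
  rewrite big_ord_recl big_ord_recl big_ord_recl.
  have hr : 0 <= \sum_(i < n') h (lift ord0 (lift ord0 (lift ord0 i))).
    by apply: sumr_ge0 => i _; exact: sqr_ge0.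
  move: hr; rewrite /h /xa /ya /=.
  set q0 := Q k ord0; set q1 := Q k o1; set tk := t k 0.
  set S := \sum_(i < n') _; move=> hr.
  rewrite !mulr0 !mulr1 !addr0 !add0r.
  have ha : e ^+ 2 * q0 ^+ 2 <= q0 ^+ 2.
    have : e ^+ 2 <= 1 by nra.
    have : 0 <= q0 ^+ 2 by exact: sqr_ge0.
    nra.
  have hb : q0 ^+ 2 <= ((tk - q0) ^+ 2 + (tk - q0 * -1) ^+ 2) / 2.
    have : 0 <= tk ^+ 2 by exact: sqr_ge0.
    rewrite mulrN1 opprK; nra.
  have hc : e ^+ 2 * q1 ^+ 2 <= 2 * (tk - q1 * e) ^+ 2 + ((tk - q0) ^+ 2 + (tk - q0 * -1) ^+ 2).
    rewrite mulrN1 opprK.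
    have : 0 <= (tk + (tk - q1 * e)) ^+ 2 by exact: sqr_ge0.
    have : 0 <= q0 ^+ 2 by exact: sqr_ge0.
    have -> : e ^+ 2 * q1 ^+ 2 = (tk - (tk - q1 * e)) ^+ 2 by ring.
    nra.
  nra.
have S0 : 0 <= \sum_(i < n'.+3) (col i X - Q *m col (pi i) Y + t) ord0 0 ^+ 2.
  by apply: sumr_ge0 => i _; exact: sqr_ge0.
have HS : e ^+ 2 * \sum_(k' < d'.+1) (Q (lift ord0 k') ord0 ^+ 2 + Q (lift ord0 k') o1 ^+ 2)
   <= 2 * \sum_(k' < d'.+1) \sum_(i0 < n'.+3)
       (col i0 X - Q *m col (pi i0) Y + t) (lift ord0 k') 0 ^+ 2.
  by rewrite !mulr_sumr; apply: ler_sum => k' _; exact: HG.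
move: HS; rewrite big_split /= mulrDr.
set A := \sum_(k' < d'.+1) Q (lift ord0 k') ord0 ^+ 2.
set B := \sum_(k' < d'.+1) Q (lift ord0 k') o1 ^+ 2.
move=> HS.
have c0 : Q ord0 ord0 ^+ 2 + A = 1.
  rewrite /A.
  have := congr1 (fun M : 'M[R]_d'.+2 => M ord0 ord0) oQ.
  rewrite /= !mxE eqxx big_ord_recl /= => H; apply: etrans H; symmetry.
  rewrite mxE expr2; congr (_ + _); apply: eq_bigr => i _; by rewrite mxE expr2.
have c1 : Q ord0 o1 ^+ 2 + B = 1.
  rewrite /B.
  have := congr1 (fun M : 'M[R]_d'.+2 => M o1 o1) oQ.
  rewrite /= !mxE eqxx big_ord_recl /= => H; apply: etrans H; symmetry.
  rewrite mxE expr2; congr (_ + _); apply: eq_bigr => i _; by rewrite mxE expr2.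
have r0 : Q ord0 ord0 ^+ 2 + Q ord0 o1 ^+ 2 <= 1.
  have := congr1 (fun M : 'M[R]_d'.+2 => M ord0 ord0) (mulmx1C oQ).
  rewrite /= !mxE eqxx big_ord_recl big_ord_recl /= => H.
  have {}H : _ = (1 : R) := H; rewrite -H.
  rewrite !mxE -!expr2 addrA lerDl.
  by apply: sumr_ge0 => i _; rewrite !mxE -expr2; exact: sqr_ge0.
have e2 : 0 <= e ^+ 2 by exact: sqr_ge0.
have AB : 1 <= A + B by lra.
nra.
Qed.


Lemma norm2_colXX d' n (j : 'I_n) :
  norm2 (col j (XX d'.+2 n)) = Num.sqrt (xa j ^+ 2).
Proof.
rewrite /norm2 (@sum2 d' (fun k => (col j (XX d'.+2 n)) k 0 ^+ 2)).
  by rewrite !mxE /= expr0n addr0.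
move=> k hk.
have h0 : (val k == 0%N) = false by move: hk; case: (val k).
by rewrite !mxE h0 expr0n.
Qed.

Lemma norm2_colYY d' n e (j : 'I_n) :
  norm2 (col j (YY d'.+2 n e)) = Num.sqrt (xa j ^+ 2 + ya e j ^+ 2).
Proof.
rewrite /norm2 (@sum2 d' (fun k => (col j (YY d'.+2 n e)) k 0 ^+ 2)).
  by rewrite !mxE /=.
move=> k hk.
have h0 : (val k == 0%N) = false by move: hk; case: (val k).
have h1 : (val k == 1%N) = false by move: hk; case: (val k) => [|[|]].
by rewrite !mxE h0 h1 expr0n.
Qed.

Lemma norm12_le1 d n (Z : 'M[R]_(d, n)) :
  (forall j, norm2 (col j Z) <= 1) -> norm12 Z <= 1.
Proof.
move=> H; rewrite /norm12.
apply: (big_ind (fun y => y <= 1)) => //.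
by move=> a b ha hb; rewrite ge_max ha hb.
Qed.

Lemma sqrt_le1 (x : R) : x <= 1 -> Num.sqrt x <= 1.
Proof. by move=> h; rewrite -sqrtr1 ler_sqrt //; lra. Qed.

Lemma term_bound (D E e : R) : (E = 0 \/ D ^+ 2 = 1) -> E ^+ 2 <= e ^+ 2 ->
  `|Num.sqrt (D ^+ 2) - Num.sqrt (D ^+ 2 + E ^+ 2)| <= e ^+ 2.
Proof.
move=> [->|->] hE.
  by rewrite expr0n addr0 subrr normr0 sqr_ge0.
rewrite sqrtr1.
set s := Num.sqrt (1 + E ^+ 2).
have s1 : 1 <= s.
  have hE2 : 0 <= E ^+ 2 by exact: sqr_ge0.
  rewrite /s -{1}sqrtr1 ler_sqrt; lra.
have s2 : s ^+ 2 = 1 + E ^+ 2 by rewrite /s sqr_sqrtr // addr_ge0 ?sqr_ge0.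
rewrite ler0_norm; last lra.
nra.
Qed.

Lemma pair_cases e n (i j : 'I_n) :
  (ya e i - ya e j = 0) \/ (xa i - xa j) ^+ 2 = 1.
Proof.
rewrite /xa /ya; case: (nat_of_ord i) => [|[|m]]; case: (nat_of_ord j) => [|[|m']] /=;
  try (left; ring); right; ring.
Qed.

Lemma hgw_ub d' n (e : R) : 0 < e -> e <= 1 ->
  d_hgw (XX d'.+2 n) (YY d'.+2 n e) <= (n%:R) ^+ 2 * e ^+ 2.
Proof.
move=> e0 e1.
apply: (@le_trans _ _ (hgw_cost (XX d'.+2 n) (YY d'.+2 n e) 1%g)).
  by rewrite /d_hgw (bigD1 1%g) //= ge_min lexx.
rewrite /hgw_cost.
apply: (@le_trans _ _ (\sum_(i < n) \sum_(j < n) e ^+ 2)).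
  apply: ler_sum => i _; apply: ler_sum => j _.
  rewrite !perm1 norm2_XX norm2_YY.
  apply: term_bound; first exact: pair_cases.
  rewrite /ya; case: (2 <= nat_of_ord i)%N; case: (2 <= nat_of_ord j)%N;
    rewrite ?subrr ?subr0 ?sub0r ?sqrrN ?expr0n ?sqr_ge0 //=.
by rewrite !sumr_const !card_ord -mulrnA -[leLHS]mulr_natr natrM mulrC -expr2.
Qed.

Lemma dproc_lb d' n' (e : R) : 0 < e -> e <= 1 ->
  e / 2 <= d_procrustes (XX d'.+2 n'.+3) (YY d'.+2 n'.+3 e).
Proof.
move=> e0 e1.
rewrite /d_procrustes.
set S := (X in inf X).
have hS : e ^+ 2 / 2 <= inf S.
  apply: lb_le_inf.
    exists (procrustes_cost (XX d'.+2 n'.+3) (YY d'.+2 n'.+3 e) 1%g 1%:M 0).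
    exists 1%g, 1%:M, 0; split => //.
    by rewrite /orthogonal_mx trmx1 mul1mx.
  by move=> r [pi [Q [t [oQ ->]]]]; exact: cost_lb.
have -> : e / 2 = Num.sqrt ((e / 2) ^+ 2).
  by rewrite sqrtr_sqr ger0_norm //; lra.
rewrite ler_sqrt; last by apply: le_trans hS; nra.
apply: le_trans hS; nra.
Qed.

End Constr.

Theorem theorem2 (R : realType) (n d : nat) (c alpha : R) :
  (3 <= n)%N -> (2 <= d)%N -> 0 < c -> 0 < alpha ->
  (forall X Y : 'M[R]_(d, n), norm12 X <= 1 -> norm12 Y <= 1 ->
     c * (d_procrustes X Y `^ alpha) <= d_hgw X Y) ->
  2 <= alpha.
Proof.
move=> n3 d2 c0 a0.
case: n n3 => [|[|[|n']]] // _.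
case: d d2 => [|[|d']] // _ H.
have K0 : 0 < 4 * (n'.+3%:R : R) ^+ 2.
  by rewrite mulr_gt0 // exprn_gt0 // ltr0n.
apply: (@final_ineq R c alpha _ c0 a0 K0) => de de0 de1.
set e := 2 * de.
have e0 : 0 < e by rewrite /e; lra.
have e1 : e <= 1 by rewrite /e; lra.
have nX : norm12 (XX R d'.+2 n'.+3) <= 1.
  apply: norm12_le1 => j; rewrite norm2_colXX; apply: sqrt_le1.
  rewrite /xa; case: (nat_of_ord j) => [|[|m]] /=; lra.
have nY : norm12 (YY R d'.+2 n'.+3 e) <= 1.
  apply: norm12_le1 => j; rewrite norm2_colYY; apply: sqrt_le1.
  rewrite /xa /ya; case: (nat_of_ord j) => [|[|m]] /=; nra.
have h := H _ _ nX nY.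
have hu := hgw_ub R d' n'.+3 e e0 e1.
have hl := dproc_lb R d' n' e e0 e1.
have hp : de `^ alpha <= d_procrustes (XX R d'.+2 n'.+3) (YY R d'.+2 n'.+3 e) `^ alpha.
  apply: ge0_ler_powR; first exact: ltW.
  - by rewrite nnegrE; apply: ltW.
  - by rewrite nnegrE; apply: le_trans hl; rewrite /e; lra.
  - by move: hl; rewrite /e; lra.
have : c * de `^ alpha <= c * d_procrustes (XX R d'.+2 n'.+3) (YY R d'.+2 n'.+3 e) `^ alpha.
  by rewrite ler_pM2l.
move=> h2.
apply: (le_trans h2); apply: (le_trans h); apply: (le_trans hu).
by rewrite /e; lra.
Qed.
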